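(* Let $\Omega$ be a pointed solid closed convex cone in a finite-dimensional real inner product space $X$ with $\Omega^*$ facially compact and locally smooth, and $1\le j\le d$. Let $(E,F),(E,F_k^i)\in\mathcal P_j$ for $k\in\mathbb N$, $i=0,1$, with $F_k^i\to F$ (Fell topology) as $k\to\infty$, and let $\varepsilon_k\to0^+$. If the limit $v=\lim_k\varepsilon_k^{-1}\bigl(e_{F_k^0}(E)-e_{F_k^1}(E)\bigr)$ exists, then $v\in E_{1/2}(F)$.
   Context: $A^*=\{y:\langle y,a\rangle\ge0\ \forall a\in A\}$, $A^\circledast=A^*\cap\operatorname{span}A$. Faces: subsets $F$ of a convex set such that every segment with midpoint in $F$ lies in $F$. $0=n_0<\dots<n_d=\dim X$ are the dimensions of faces of $\Omega^*$, $P_j$ the faces of dimension $n_{d-j}$ with the Fell topology (from closed subsets of $X$); facially compact: each $P_j$ compact. Modular face of a cone $C$: a face $E$ containing a face of dimension $\max\{\dim G:G\text{ face of }C,\dim G<\dim E\}$; smooth: relative interiors of those maximal-dimensional proper faces consist of regular points of $E$; locally smooth: all modular faces smooth. $\mathcal P_j=\{(E,F)\in P_{j-1}\times P_j:E\supset F\}$; $e_F(E)$ is the unit generator of the extreme ray $F^\perp\cap E^\circledast$ of $E^\circledast$; $E_{1/2}(F)=\operatorname{span}(E)\cap F^\perp\cap e_F(E)^\perp$. *)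

(* Defs.v *)
From HB Require Import structures.
From mathcomp Require Import all_boot all_order all_algebra.
From mathcomp Require Import all_classical all_reals all_analysis.
Import Order.TTheory GRing.Theory Num.Theory numFieldNormedType.Exports.

Set Implicit Arguments.
Unset Strict Implicit.
Unset Printing Implicit Defensive.

Local Open Scope classical_set_scope.
Local Open Scope ring_scope.

Section ConeDefs.
Context {R : realType} {n : nat}.
Local Notation X := 'rV[R]_n.

Definition dotv (u v : X) : R := \sum_(i < n) u 0 i * v 0 i.

Definition orth (A : set X) : set X := [set y | forall a, A a -> dotv y a = 0].

Definition dual (A : set X) : set X := [set y | forall a, A a -> 0 <= dotv y a].

Definition span (A : set X) : set X :=
  [set x | exists (k : nat) (v : 'I_k -> X) (c : 'I_k -> R),
      (forall i, A (v i)) /\ x = \sum_(i < k) c i *: v i].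

Definition dualspan (A : set X) : set X := dual A `&` span A.

(** dim (span A) = k : there are k linearly independent vectors of A
    spanning every element of A *)
Definition has_dim (A : set X) (k : nat) : Prop :=
  exists M : 'M[R]_(k, n),
    [/\ forall i, A (row i M), row_free M & forall x, A x -> (x <= M)%MS].

Definition convex_set (A : set X) : Prop :=
  forall x y (t : R), A x -> A y -> 0 <= t <= 1 -> A ((1 - t) *: x + t *: y).

Definition closed_convex_cone (C : set X) : Prop :=
  [/\ C !=set0, closed C, convex_set C & forall x (t : R), C x -> 0 <= t -> C (t *: x)].

Definition pointed_cone (C : set X) : Prop := forall x, C x -> C (- x) -> x = 0.

Definition solid (C : set X) : Prop := interior C !=set0.

Definition is_face (C F : set X) : Prop :=
  [/\ F `<=` C, F !=set0, convex_set F &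
      forall x y, C x -> C y -> F ((2%:R)^-1 *: (x + y)) ->
        forall t : R, 0 <= t <= 1 -> F ((1 - t) *: x + t *: y)].

Definition face_dim_seq (C : set X) (ns : seq nat) : Prop :=
  sorted ltn ns /\ forall k, (k \in ns) <-> exists F, is_face C F /\ has_dim F k.

(** P_j : faces of C of dimension n_{d-j}, where d = size ns - 1 *)
Definition Pj (C : set X) (ns : seq nat) (j : nat) : set (set X) :=
  [set F | is_face C F /\ has_dim F (nth 0%N ns ((size ns).-1 - j))].

Definition Pcal (C : set X) (ns : seq nat) (j : nat) : set (set X * set X) :=
  [set EF | [/\ Pj C ns j.-1 EF.1, Pj C ns j EF.2 & EF.2 `<=` EF.1]].

(** relative interior of G (interior within span G = aff G) *)
Definition relint (G : set X) : set X :=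
  [set x | G x /\ exists e : R, 0 < e /\
     forall y, span G y -> dotv (y - x) (y - x) < e -> G y].

(** regular point x of the convex cone E: the normal cone of E at x
    (taken inside span E) is a single ray *)
Definition regular_point (E : set X) (x : X) : Prop :=
  E x /\ has_dim [set y | dualspan E y /\ dotv y x = 0] 1.

Definition maxdim_below (C : set X) (m k : nat) : Prop :=
  [/\ (m < k)%N, exists G, is_face C G /\ has_dim G m &
      forall H l, is_face C H -> has_dim H l -> (l < k)%N -> (l <= m)%N].

Definition modular_face (C E : set X) : Prop :=
  is_face C E /\ exists k m, [/\ has_dim E k, maxdim_below C m k &
     exists G, [/\ is_face C G, G `<=` E & has_dim G m]].

Definition smooth_face (C E : set X) : Prop :=
  forall k m, has_dim E k -> maxdim_below C m k ->
    forall G, is_face C G -> G `<=` E -> has_dim G m ->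
      forall x, relint G x -> regular_point E x.

Definition locally_smooth (C : set X) : Prop :=
  forall E, modular_face C E -> smooth_face C E.

Definition eF (E F : set X) : X :=
  xget 0 [set e | dotv e e = 1 /\
     dualspan E `&` orth F = [set t *: e | t in [set t : R | 0 <= t]]].

Definition Ehalf (E F : set X) : set X :=
  span E `&` orth F `&` orth [set eF E F].

(** The Fell topology on subsets of X, generated by the subbasic sets
    {A | A \cap K = empty} (K compact) and {A | A \cap U nonempty} (U open) *)
Definition fell_idx : Type := (bool * set X)%type.
HB.instance Definition _ := Choice.on fell_idx.
HB.instance Definition _ := isPointed.Build fell_idx (true, set0).

Definition fell : Type := set X.
HB.instance Definition _ := Choice.on fell.

Definition fell_D : set fell_idx :=
  [set i | if i.1 then compact i.2 else open i.2].
Definition fell_b (i : fell_idx) : set fell :=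
  if i.1 then [set A : fell | A `&` i.2 = set0]
  else [set A : fell | A `&` i.2 !=set0].

HB.instance Definition _ := isSubBaseTopological.Build fell fell_D fell_b.

Definition facially_compact (C : set X) (ns : seq nat) : Prop :=
  forall j, (j <= (size ns).-1)%N -> compact (Pj C ns j : set fell).

End ConeDefs.

(* Main.v *)
Require Import Defs.
From HB Require Import structures.
From mathcomp Require Import all_boot all_order all_algebra.
From mathcomp Require Import all_classical all_reals all_analysis.
Import Order.TTheory GRing.Theory Num.Theory numFieldNormedType.Exports.
Local Open Scope classical_set_scope.
Local Open Scope ring_scope.
From mathcomp Require Import lra ring zify.


Section A.
Context {R : realType} {n : nat}.
Local Notation X := 'rV[R]_n.
Implicit Types u w x y : X.

Lemma msq (r : R) : 0 <= r * r.
Proof. by rewrite -expr2 sqr_ge0. Qed.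

Lemma dotvC u w : dotv u w = dotv w u.
Proof. by apply: eq_bigr => i _; rewrite mulrC. Qed.
Lemma dotvDl u w x : dotv (u + w) x = dotv u x + dotv w x.
Proof. by rewrite /dotv -big_split; apply: eq_bigr => i _; rewrite !mxE mulrDl. Qed.
Lemma dotvDr u w x : dotv x (u + w) = dotv x u + dotv x w.
Proof. by rewrite dotvC dotvDl !(dotvC x). Qed.
Lemma dotvZl (a : R) u x : dotv (a *: u) x = a * dotv u x.
Proof. by rewrite /dotv mulr_sumr; apply: eq_bigr => i _; rewrite !mxE mulrA. Qed.
Lemma dotvZr (a : R) u x : dotv x (a *: u) = a * dotv x u.
Proof. by rewrite dotvC dotvZl dotvC. Qed.
Lemma dotvNl u x : dotv (- u) x = - dotv u x.
Proof. by rewrite -scaleN1r dotvZl mulN1r. Qed.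
Lemma dotvNr u x : dotv x (- u) = - dotv x u.
Proof. by rewrite dotvC dotvNl dotvC. Qed.
Lemma dotvBl u w x : dotv (u - w) x = dotv u x - dotv w x.
Proof. by rewrite dotvDl dotvNl. Qed.
Lemma dotvBr u w x : dotv x (u - w) = dotv x u - dotv x w.
Proof. by rewrite dotvDr dotvNr. Qed.
Lemma dotv0l x : dotv 0 x = 0.
Proof. by rewrite /dotv big1 // => i _; rewrite mxE mul0r. Qed.
Lemma dotv0r x : dotv x 0 = 0.
Proof. by rewrite dotvC dotv0l. Qed.
Lemma dotv_ge0 u : 0 <= dotv u u.
Proof. by apply: sumr_ge0 => i _; exact: msq. Qed.
Lemma coord_sq_le u i : u 0 i * u 0 i <= dotv u u.
Proof.
rewrite /dotv (bigD1 i) //= lerDl; apply: sumr_ge0 => k _; exact: msq.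
Qed.
Lemma dotv_eq0 u : dotv u u = 0 -> u = 0.
Proof.
move=> h; apply/rowP => i; rewrite mxE; apply/eqP.
have : u 0 i * u 0 i == 0 by rewrite eq_le msq andbT -h coord_sq_le.
by rewrite mulf_eq0 orbb.
Qed.
Lemma dotv_sumr (k : nat) (c : 'I_k -> R) (v : 'I_k -> X) x :
  dotv x (\sum_(i < k) c i *: v i) = \sum_(i < k) c i * dotv x (v i).
Proof.
elim/big_rec2: _ => [|i y1 y2 _ <-]; first exact: dotv0r.
by rewrite dotvDr dotvZr.
Qed.

Lemma coord_le_norm u i : `|u 0 i| <= `|u|.
Proof.
have -> : `|u| = mx_norm u by [].
rewrite mx_normrE.
by apply/bigmax_geP; right => /=; exists (0, i).
Qed.

Lemma coord_le1 u i : dotv u u = 1 -> `|u 0 i| <= 1.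
Proof.
move=> h; have := coord_sq_le u i; rewrite h => hh.
rewrite leNgt; apply/negP => lt1.
have : 1 < `|u 0 i| * `|u 0 i| by rewrite mulr_egt1.
by rewrite -normrM ger0_norm ?msq // ltNge hh.
Qed.

Lemma norm_le1 u : dotv u u = 1 -> `|u| <= 1.
Proof.
move=> h; have -> : `|u| = mx_norm u by [].
rewrite mx_normrE.
apply: bigmax_le => // -[a b] _ /=; rewrite (ord1 a); exact: coord_le1.
Qed.

Lemma dotv_bound u w : `|dotv u w| <= n%:R * (`|u| * `|w|).
Proof.
rewrite /dotv; apply: (le_trans (ler_norm_sum _ _ _)).
have -> : n%:R * (`|u| * `|w|) = \sum_(i < n) (`|u| * `|w|).
  by rewrite sumr_const card_ord mulr_natl.
apply: ler_sum => i _.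
by rewrite normrM ler_pM // coord_le_norm.
Qed.

Lemma hc : continuous (fun z : R * R => z.1 + z.2).
Proof. exact: add_continuous. Qed.

Lemma cvg_dotv {T : Type} (F : set_system T) {FF : Filter F} (f g : T -> X) (a b : X) :
  f @ F --> a -> g @ F --> b -> (fun t => dotv (f t) (g t)) @ F --> dotv a b.
Proof.
move=> fa gb; rewrite /dotv.
apply: (cvg_big hc) => i _.
apply: cvgM.
  exact: (cvg_comp _ _ fa (@coord_continuous R 1 n 0 i a)).
exact: (cvg_comp _ _ gb (@coord_continuous R 1 n 0 i b)).
Qed.

Lemma dotv_continuous_l (a : X) : continuous (fun x : X => dotv x a).
Proof. move=> x; exact: (@cvg_dotv _ (nbhs x) _ id (fun=> a) x a cvg_id (cvg_cst a)). Qed.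

Lemma dotv_continuous_sq : continuous (fun x : X => dotv x x).
Proof. move=> x; exact: (@cvg_dotv _ (nbhs x) _ id id x x cvg_id cvg_id). Qed.

End A.


Section B.
Context {R : realType} {n : nat}.
Local Notation X := 'rV[R]_n.
Implicit Types u w x y : X.

Lemma closed_pre (f : X -> R) (D : set R) : continuous f -> closed D ->
  closed [set x | D (f x)].
Proof. move=> cf cD; apply: (@preimage_closed _ _ f D) => // x _; exact: cf. Qed.

Lemma span_sub (A : set X) k (M : 'M[R]_(k, n)) x :
  (forall y, A y -> (y <= M)%MS) -> Defs.span A x -> (x <= M)%MS.
Proof.
move=> hA [m [v [c [Av ->]]]]; apply: summx_sub => i _.
by apply: scalemx_sub; apply: hA.
Qed.

Lemma sub_span (A : set X) k (M : 'M[R]_(k, n)) x :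
  (forall i, A (row i M)) -> (x <= M)%MS -> Defs.span A x.
Proof.
move=> hA /submxP [c ->]; exists k, (fun i => row i M), (fun i => c 0 i).
by split => //; rewrite mulmx_sum_row.
Qed.

Lemma in_span (A : set X) x : A x -> Defs.span A x.
Proof.
move=> Ax; exists 1%N, (fun=> x), (fun=> 1); split => //.
by rewrite big_ord1 scale1r.
Qed.

Lemma span_comb (A : set X) x y (a b : R) : Defs.span A x -> Defs.span A y -> Defs.span A (a *: x + b *: y).
Proof.
move=> [k1 [v1 [c1 [A1 ->]]]] [k2 [v2 [c2 [A2 ->]]]].
exists (k1 + k2)%N, (fun i => match fintype.split i with inl i1 => v1 i1 | inr i2 => v2 i2 end),
  (fun i => match fintype.split i with inl i1 => a * c1 i1 | inr i2 => b * c2 i2 end).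
split; first by move=> i; case: (fintype.split i).
rewrite big_split_ord /= !scaler_sumr; congr (_ + _); apply: eq_bigr => i _.
  by rewrite (unsplitK (inl i : 'I_k1 + 'I_k2)) scalerA.
by rewrite (unsplitK (inr i : 'I_k1 + 'I_k2)) scalerA.
Qed.

Lemma closed_rowspace k (M : 'M[R]_(k, n)) : closed [set x : X | (x <= M)%MS].
Proof.
have -> : [set x : X | (x <= M)%MS] =
    \bigcap_(j in setT) [set x : X | dotv x (row j (cokermx M)^T) = 0].
  apply/seteqP; split => x /=.
    move=> xM j _ /=; move: xM; rewrite submxE => /eqP /rowP /(_ j).
    by rewrite !mxE => <-; rewrite /dotv; apply: eq_bigr => i _; rewrite !mxE.
  move=> h; rewrite submxE; apply/eqP/rowP => j; rewrite [RHS]mxE.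
  transitivity (dotv x (row j (cokermx M)^T)); last exact: h.
  by rewrite !mxE /dotv; apply: eq_bigr => i _; rewrite !mxE.
apply: closed_bigI => j _; apply: (@closed_pre _ [set r | r = 0]).
  exact: dotv_continuous_l.
exact: closed_eq.
Qed.

End B.


Section C.
Context {R : realType} {n : nat}.
Local Notation X := 'rV[R]_n.
Implicit Types u w x y : X.

Definition cvx_cone (C : set X) :=
  [/\ C 0, forall x y, C x -> C y -> C (x + y) & forall (t : R) x, 0 <= t -> C x -> C (t *: x)].

Lemma dual_cone (A : set X) : cvx_cone (dual A).
Proof.
split.
- by move=> a _; rewrite dotv0l.
- by move=> x y hx hy a Aa; rewrite dotvDl addr_ge0 // ?hx ?hy.
- by move=> t x t0 hx a Aa; rewrite dotvZl mulr_ge0 // hx.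
Qed.

Section face.
Variables (C G : set X).
Hypotheses (hC : cvx_cone C) (hG : is_face C G).

Lemma face_scale2 x (t : R) : G x -> 0 <= t <= 2 -> G (t *: x).
Proof.
case: hC => C0 _ Cs; case: hG => GC _ _ Gf Gx /andP[t0 t2].
have C2 : C (2%:R *: x) by apply: Cs => //; apply: GC.
have := Gf 0 (2%:R *: x) C0 C2; rewrite add0r scalerA mulVf ?pnatr_eq0 // scale1r.
move=> /(_ Gx (t / 2%:R)); rewrite scaler0 add0r scalerA mulfVK ?pnatr_eq0 //.
apply; apply/andP; split; first by rewrite divr_ge0.
by rewrite ler_pdivrMr ?ltr0n // mul1r.
Qed.

Lemma face_scale x (t : R) : G x -> 0 <= t -> G (t *: x).
Proof.
move=> Gx t0.
have pow : forall N, G ((2%:R ^+ N : R) *: x).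
  elim=> [|N IH]; first by rewrite expr0 scale1r.
  by rewrite exprS -scalerA; apply: face_scale2 => //; rewrite ler0n lexx.
have [N hN] : exists N, t <= 2%:R ^+ N.
  exists (Num.Def.archi_bound t); apply: (le_trans (ltW (archi_boundP t0))).
  elim: (Num.Def.archi_bound t) => [|N IH]; first by rewrite expr0.
  have : 1 <= (2%:R ^+ N : R) by rewrite exprn_ege1 // ler1n.
  rewrite exprS -natr1; lra.
have p0 : 0 < (2%:R ^+ N : R) by rewrite exprn_gt0.
have -> : t *: x = (t / 2%:R ^+ N) *: ((2%:R ^+ N : R) *: x).
  by rewrite scalerA mulfVK // gt_eqF.
apply: face_scale2 => //; apply/andP; split; first by rewrite divr_ge0 // ltW.
rewrite ler_pdivrMr // (le_trans hN) //; lra.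
Qed.

Lemma face0 : G 0.
Proof. by case: hG => _ [x Gx] _ _; rewrite -(scale0r x); apply: face_scale. Qed.

Lemma faceD x y : G x -> G y -> G (x + y).
Proof.
move=> Gx Gy; case: hG => _ _ cG _.
have := cG x y (2%:R^-1) Gx Gy; rewrite invr_ge0 ler0n /= invf_le1 ?ler1n ?ltr0n //.
have -> : 1 - 2%:R^-1 = 2%:R^-1 :> R by lra.
rewrite -scalerDr => /(_ isT) h.
have := @face_scale _ 2%:R h (ler0n _ 2).
by rewrite scalerA mulfV ?pnatr_eq0 // scale1r.
Qed.

Lemma face_comb m (M : 'M[R]_(m, n)) (c : 'rV[R]_m) :
  (forall i, G (row i M)) -> (forall i, 0 <= c 0 i) -> G (c *m M).
Proof.
move=> GM c0; rewrite mulmx_sum_row.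
apply: (big_ind G face0 faceD) => i _; exact: face_scale.
Qed.

Lemma coord_lt (w : X) (s : R) j : 0 < s -> dotv w w < s * s -> `|w 0 j| < s.
Proof.
move=> s0 h; rewrite ltNge; apply/negP => hs.
have : s * s <= `|w 0 j| * `|w 0 j| by rewrite ler_pM // ltW.
rewrite -normrM ger0_norm ?msq // => h2.
by have := le_lt_trans h2 (le_lt_trans (coord_sq_le w j) h); rewrite ltxx.
Qed.

Lemma relint_ex m (M : 'M[R]_(m, n)) : (forall i, G (row i M)) -> row_free M ->
  (forall y, G y -> (y <= M)%MS) -> exists x, relint G x.
Proof.
move=> GM /row_freeP [B MB] GsubM.
pose K := \sum_(j < n) \sum_(i < m) `|B j i|.
have K0 : 0 <= K by apply: sumr_ge0 => j _; apply: sumr_ge0 => i _.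
pose s := (2%:R * (K + 1))^-1.
have s0 : 0 < s by rewrite invr_gt0 mulr_gt0 // ?ltr0n //; lra.
have sK : s * K < 1.
  rewrite /s mulrC ltr_pdivrMr; last by rewrite mulr_gt0 ?ltr0n //; lra.
  lra.
pose x0 := (const_mx 1 : 'rV[R]_m) *m M.
exists x0; split; first by apply: face_comb => // i; rewrite mxE.
exists (s * s); split; first by rewrite mulr_gt0.
move=> y ysp hy; have yM := @span_sub _ _ G m M y GsubM ysp.
have yE : y = (y *m B) *m M.
  by case/submxP: yM => c ->; rewrite -[c *m M *m B]mulmxA MB mulmx1.
rewrite yE; apply: face_comb => // i.
have -> : y *m B = x0 *m B + (y - x0) *m B by rewrite -mulmxDl addrC subrK.
rewrite /x0 -mulmxA MB mulmx1 !mxE.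
set z := \sum_j _.
suff : `|z| < 1 by rewrite ltr_norml; lra.
rewrite /z; apply: (le_lt_trans (ler_norm_sum _ _ _)).
apply: (le_lt_trans _ sK); rewrite mulr_sumr; apply: ler_sum => j _.
rewrite normrM; apply: ler_pM => //.
  exact/ltW/coord_lt.
by rewrite (bigD1 i) //= lerDl; apply: sumr_ge0.
Qed.

End face.

End C.


Section D.
Context {R : realType} {n : nat}.
Local Notation X := 'rV[R]_n.
Implicit Types u w x y : X.

Lemma normal_orth (E G : set X) x y : G `<=` E -> relint G x -> dual E y ->
  dotv y x = 0 -> orth G y.
Proof.
move=> GE [Gx [e [e0 he]]] yE yx g Gg.
pose D := dotv (x - g) (x - g).
have D0 : 0 <= D := dotv_ge0 _.
pose s := e / (e + D).
have eD : 0 < e + D by lra.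
have s0 : 0 < s by rewrite divr_gt0.
have s1 : s <= 1 by rewrite ler_pdivrMr // mul1r; lra.
have sD : s * D < e.
  rewrite /s mulrAC ltr_pdivrMr //; nra.
pose z := (1 + s) *: x + (- s) *: g.
have zsp : Defs.span G z by apply: span_comb; apply: in_span.
have zx : z - x = s *: (x - g).
  by rewrite /z scalerDl scale1r scalerBr scaleNr [LHS]addrC addrA addKr.
have Gz : G z.
  apply: he => //; rewrite zx dotvZl dotvZr.
  apply: (le_lt_trans _ sD); rewrite mulrA ler_wpM2r //; nra.
have := yE z (GE z Gz); rewrite /z dotvDr !dotvZr yx mulr0 add0r.
have := yE g (GE g Gg); nra.
Qed.

Lemma span_scale (A : set X) (a : R) x : Defs.span A x -> Defs.span A (a *: x).
Proof.
move=> h; have := @span_comb _ _ A x x a 0 h h; by rewrite scale0r addr0.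
Qed.

Lemma ray_ex (E G : set X) x : G x ->
  (forall y, dualspan E y -> dotv y x = 0 -> orth G y) ->
  has_dim [set y | dualspan E y /\ dotv y x = 0] 1 ->
  exists e, dotv e e = 1 /\
    dualspan E `&` orth G = [set t *: e | t in [set t : R | 0 <= t]].
Proof.
move=> Gx horth [M1 [Su rf Msub]].
have {}Su := Su 0; set u := row 0 M1 in Su.
have M1u : M1 = u by apply/matrixP => a b; rewrite (ord1 a) mxE.
have u0 : u != 0.
  apply/negP => /eqP u0; move: rf; rewrite M1u u0 /row_free mxrank0.
  by [].
have N0 : 0 < dotv u u.
  rewrite lt_def dotv_ge0 andbT; apply/negP => /eqP /dotv_eq0 /eqP.
  by apply/negP.
set N := dotv u u in N0.
pose r := Num.sqrt N.
have r0 : 0 < r by rewrite sqrtr_gt0.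
have rr : r * r = N by rewrite -expr2 sqr_sqrtr // ltW.
have Su2 : dualspan E u /\ dotv u x = 0 := Su.
have uG : orth G u by apply: horth; [exact: Su2.1 | exact: Su2.2].
exists (r^-1 *: u); split.
  rewrite dotvZl dotvZr -/N -rr.
  have rn : r != 0 by rewrite gt_eqF.
  by field.
apply/seteqP; split => y /=.
  move=> [[yE ysp] yG].
  have yx : dotv y x = 0 by apply: yG.
  have /sub_rVP [c yc] : (y <= u)%MS by rewrite -M1u; apply: Msub.
  have c0 : 0 <= c.
    rewrite leNgt; apply/negP => c0.
    have uE : forall a, E a -> dotv u a = 0.
      move=> a Ea; have := yE a Ea; rewrite yc dotvZl.
      have := (Su.1.1 a Ea); nra.
    case: Su => [[_ [k [v [cc [Ev ue]]]]] _].
    move: N0; rewrite /N {2}ue dotv_sumr big1 ?ltxx // => i _.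
    by rewrite uE ?mulr0.
  exists (c * r); first by rewrite mulr_ge0 // ltW.
  by rewrite scalerA mulfK ?gt_eqF.
move=> [t t0 <-]; rewrite scalerA; set a := t * r^-1.
have a0 : 0 <= a by rewrite mulr_ge0 // invr_ge0 ltW.
case: Su => [[uE usp] _].
split; [split|].
- by move=> b Eb; rewrite dotvZl mulr_ge0 // uE.
- exact: span_scale.
- by move=> b Gb; rewrite dotvZl uG ?mulr0.
Qed.

End D.


Section E.
Context {R : realType} {n : nat}.
Local Notation X := 'rV[R]_n.
Implicit Types u w x y : X.

Lemma sorted_le_nth (s : seq nat) i k : sorted ltn s -> (i <= k)%N -> (k < size s)%N ->
  (nth 0%N s i <= nth 0%N s k)%N.
Proof.
move=> srt ik ks; rewrite leq_eqVlt in ik; case/orP: ik => [/eqP -> //|ik].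
apply: ltnW; apply: (sorted_ltn_nth ltn_trans) => //; rewrite inE //.
exact: ltn_trans ks.
Qed.

Lemma maxdim_ns (C : set X) ns j G : face_dim_seq C ns -> (1 <= j <= (size ns).-1)%N ->
  is_face C G -> has_dim G (nth 0%N ns ((size ns).-1 - j)) ->
  maxdim_below C (nth 0%N ns ((size ns).-1 - j)) (nth 0%N ns ((size ns).-1 - j.-1)).
Proof.
move=> [srt hns] /andP[j1 jd] fG dG.
set d := (size ns).-1 in jd *.
have hd : (d - j.-1 = (d - j).+1)%N by lia.
have hs : ((d - j).+1 < size ns)%N by rewrite /d in jd *; lia.
rewrite hd; split.
- apply: (sorted_ltn_nth ltn_trans) => //; rewrite inE //; exact: ltn_trans hs.
- by exists G.
- move=> H l fH dH lk.
  have lin : l \in ns by apply/hns; exists H.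
  have il := index_mem l ns; rewrite lin in il.
  have nl := nth_index 0%N lin.
  case: (leqP (index l ns) (d - j)) => hi.
    by rewrite -nl; apply: sorted_le_nth => //; rewrite /d in hs *; lia.
  have := @sorted_le_nth ns _ _ srt hi il; rewrite nl => kl.
  by have := leq_trans lk kl; rewrite ltnn.
Qed.

Lemma eF_spec (C : set X) ns j E G : cvx_cone C -> face_dim_seq C ns ->
  locally_smooth C -> (1 <= j <= (size ns).-1)%N -> Pcal C ns j (E, G) ->
  [/\ dotv (eF E G) (eF E G) = 1, dualspan E (eF E G), orth G (eF E G) &
     forall y, dualspan E y -> orth G y -> dotv y y = 1 -> y = eF E G].
Proof.
move=> hC hns hls hj [] /= [fE dE] [fG dG] GE.
have mb := @maxdim_ns C ns j G hns hj fG dG.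
have mE : modular_face C E.
  split => //; do 2 eexists; split; [exact: dE | exact: mb | by exists G].
have [M [GM rf Msub]] := dG.
have [x hx] := @relint_ex _ _ C G hC fG _ M GM rf Msub.
have [_ rp] := hls E mE _ _ dE mb G fG GE dG x hx.
have Gx : G x by case: hx.
have hex := @ray_ex _ _ E G x Gx (fun y hy hyx => @normal_orth _ _ E G x y GE hx hy.1 hyx) rp.
have := xgetPex 0 hex; rewrite -/(eF E G); set e := eF E G.
move=> [e1 hS].
have eL : (dualspan E `&` orth G) e by rewrite hS; exists 1; rewrite ?scale1r //= ler01.
split => //; [exact: eL.1 | exact: eL.2 |].
move=> y ys yo y1.
have : (dualspan E `&` orth G) y by [].
rewrite hS => -[t t0 ty].
move: y1; rewrite -ty dotvZl dotvZr e1 mulr1 => tt.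
have t0' : 0 <= t := t0.
have t1 : t = 1.
  have : (t - 1) * (t + 1) = 0.
    by rewrite mulrDr mulrBl mulrBl tt mul1r mulr1 mulrC; ring.
  by move/eqP; rewrite mulf_eq0 => /orP[/eqP|/eqP]; lra.
by rewrite t1 scale1r.
Qed.

End E.


Lemma fell_meet (R : realType) (n : nat) (A U : set 'rV[R]_n) :
  open U -> A `&` U !=set0 -> nbhs (A : fell) [set B : fell | B `&` U !=set0].
Proof.
move=> oU AU.
have -> : [set B : fell | B `&` U !=set0] = fell_b (false, U) by [].
apply: open_nbhs_nbhs; split => //.
exists [set (fell_b (false, U))].
  move=> _ ->. exact: (@finI_from1 _ _ fell_D fell_b (false, U) oU).
by rewrite bigcup_set1.
Qed.

Section F.
Context {R : realType} {n : nat}.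
Local Notation X := 'rV[R]_n.
Implicit Types u w x y : X.

Lemma fell_ev (G : nat -> set X) (F : set X) f (d : R) :
  (fun k => (G k : fell)) @ \oo --> (F : fell) -> F f -> 0 < d ->
  \forall k \near \oo, exists f', G k f' /\ `|f - f'| < d.
Proof.
move=> hc Ff d0.
have FU : F `&` ball f d !=set0 by exists f; split => //; exact: ballxx.
have := hc _ (@fell_meet R n F (ball f d) (ball_open f d) FU).
move=> h; near=> k.
have [f' [Gf' bf']] : (G k : fell) `&` ball f d !=set0 by near: k.
exists f'; split => //.
by move: bf'; rewrite -ball_normE.
Unshelve. all: by end_near. Qed.

Lemma small0 (a c : R) : 0 <= c -> (forall d, 0 < d -> `|a| <= c * d) -> a = 0.
Proof.
move=> c0 h; apply/eqP; rewrite -normr_eq0; apply/negP => /negP a0.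
have a0' : 0 < `|a| by rewrite lt_def a0 normr_ge0.
have c1 : c + 1 != 0 by rewrite gt_eqF //; lra.
have d0 : 0 < `|a| / (c + 1) by rewrite divr_gt0 //; lra.
have hcd : c * (`|a| / (c + 1)) = `|a| - (`|a| / (c + 1)) by field.
have := h _ d0; rewrite hcd; lra.
Qed.

Lemma small_ge0 (a c : R) : 0 <= c -> (forall d, 0 < d -> - (c * d) <= a) -> 0 <= a.
Proof.
move=> c0 h; rewrite leNgt; apply/negP => a0.
have c1 : c + 1 != 0 by rewrite gt_eqF //; lra.
have d0 : 0 < - a / (c + 1) by rewrite divr_gt0 //; lra.
have hcd : c * (- a / (c + 1)) = - a - (- a / (c + 1)) by field.
have := h _ d0; rewrite hcd; lra.
Qed.

Lemma cl_closed (e : nat -> X) (A : set X) p : closed A ->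
  (\forall k \near \oo, A (e k)) -> cluster (e @ \oo) p -> A p.
Proof.
move=> cA eA; rewrite clusterE => /(_ _ eA) hp; exact: cA.
Qed.

Lemma conv_e (E F : set X) (G : nat -> set X) (e : nat -> X) (e0 : X) kE
    (ME : 'M[R]_(kE, n)) :
  (forall y, E y -> (y <= ME)%MS) -> (forall i, E (row i ME)) ->
  (forall k, dotv (e k) (e k) = 1) -> (forall k, dualspan E (e k)) ->
  (forall k, orth (G k) (e k)) ->
  (forall y, dualspan E y -> orth F y -> dotv y y = 1 -> y = e0) ->
  (fun k => (G k : fell)) @ \oo --> (F : fell) ->
  e @ \oo --> e0.
Proof.
move=> EM ME1 e1 eds eo uniq hF.
have hcl : forall p, cluster (e @ \oo) p -> dotv p p = 1 /\ p = e0.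
  move=> p cp.
  have p1 : dotv p p = 1.
    apply: (@cl_closed e [set x | dotv x x = 1]) cp.
      apply: (@closed_pre _ _ (fun x => dotv x x) [set r | r = 1]).
        exact: dotv_continuous_sq.
      exact: closed_eq.
    exact: nearW.
  split => //; apply: uniq => //.
  - split.
    + move=> a Ea; apply: (@cl_closed e [set x | 0 <= dotv x a]) cp.
        apply: (@closed_pre _ _ (fun x => dotv x a) [set r | 0 <= r]).
          exact: dotv_continuous_l.
        exact: closed_ge.
      by apply: nearW => k; apply: (eds k).1.
    + apply: (@sub_span _ _ E kE ME p ME1).
      apply: (@cl_closed e [set x | (x <= ME)%MS]) cp; first exact: closed_rowspace.
      by apply: nearW => k; apply: (@span_sub _ _ E kE ME (e k) EM (eds k).2).
  - move=> f Ff; apply: (@small0 _ n%:R) => // d d0.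
    apply: (@cl_closed e [set x | `|dotv x f| <= n%:R * d]) cp.
      apply: (@closed_pre _ _ (fun x => `|dotv x f|) [set r | r <= n%:R * d]).
        move=> x; have := cvg_norm (dotv_continuous_l f x); exact.
      exact: closed_le.
    have := @fell_ev G F f d hF Ff d0; apply: filterS => k [f' [Gf' hf']].
    rewrite /=; have -> : dotv (e k) f = dotv (e k) (f - f').
      by rewrite dotvBr (eo k f' Gf') subr0.
    apply: (le_trans (dotv_bound _ _)); rewrite ler_wpM2l //.
    rewrite -[d]mul1r ler_pM // ?norm_le1 //; exact: ltW.
pose V := [set v : X | forall i, `[(-2 : R), 2]%classic (v ord0 i)].
have cV : compact V.
  exact: (@rV_compact R n (fun=> `[(-2 : R), 2]%classic) (fun=> @segment_compact R _ _)).
have FV : (e @ \oo) V.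
  have : \forall k \near \oo, V (e k).
    apply: nearW => k i /=; rewrite in_itv /= -ler_norml.
    have := coord_le1 (e k) i (e1 k); lra.
  exact.
have [p [_ cp]] := cV _ _ FV.
have [p1 pe] := hcl p cp; subst p.
apply: (compact_cluster_set1 (V := V)) => //.
- have : nbhs e0 (ball e0 (1 : R)) by apply: nbhsx_ballx.
  apply: filterS => y; rewrite -ball_normE /= => hy i.
  rewrite /= in_itv /= -ler_norml.
  have -> : y ord0 i = y 0 i by [].
  have -> : y 0 i = e0 0 i + (y - e0) 0 i.
    by rewrite !mxE; ring.
  apply: (le_trans (ler_normD _ _)).
  have h1 := coord_le1 e0 i p1.
  have h2 := coord_le_norm (y - e0) i.
  rewrite distrC in hy; lra.
- apply/seteqP; split => [q /hcl [] //|q ->] ; done.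
Qed.

End F.


Section G.
Context {R : realType} {n : nat}.
Local Notation X := 'rV[R]_n.
Implicit Types u w x y : X.

Lemma half_ineq (E F : set X) (G1 : nat -> set X) (e0 e1 : nat -> X) (c : nat -> R) (v : X) :
  (forall k, 0 <= c k) -> (forall k, dual E (e0 k)) -> (forall k, orth (G1 k) (e1 k)) ->
  (forall k, G1 k `<=` E) ->
  (fun k => (G1 k : fell)) @ \oo --> (F : fell) ->
  (fun k => c k *: (e0 k - e1 k)) @ \oo --> v -> forall f, F f -> 0 <= dotv v f.
Proof.
move=> c0 e0E e1o G1E hF hv f Ff.
set g := fun k => c k *: (e0 k - e1 k) in hv.
pose B := `|v| + 1.
have gB : \forall k \near \oo, `|g k| <= B.
  have hv' := hv; move/cvgrPdist_lt: hv' => /(_ 1 ltr01) hv1.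
  near=> k; have hk : `|v - g k| < 1 by near: k.
  have -> : g k = v - (v - g k) by rewrite opprB addrC subrK.
  apply: (le_trans (ler_normB _ _)); rewrite /B; lra.
have B0 : 0 <= B by rewrite /B; have := normr_ge0 v; lra.
apply: (@small_ge0 _ _ (n%:R * B)) => [|d d0]; first by rewrite mulr_ge0.
have cv : (fun k => dotv (g k) f) @ \oo --> dotv v f.
  exact: (@cvg_dotv _ _ _ \oo _ g (fun=> f) v f hv (cvg_cst f)).
apply: (@closed_cvg _ _ _ _ (fun k => dotv (g k) f) [set r : R | - (n%:R * B * d) <= r]
   (@closed_ge _ _) _ _ cv).
have ev := @fell_ev _ _ G1 F f d hF Ff d0.
near=> k.
have [f' [Gf' hf']] : exists f', G1 k f' /\ `|f - f'| < d by near: k.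
have gk : `|g k| <= B by near: k.
rewrite /= (_ : f = f' + (f - f')); last by rewrite addrC subrK.
rewrite dotvDr.
have h1 : 0 <= dotv (g k) f'.
  rewrite /g dotvZl dotvBl (e1o k f' Gf') subr0 mulr_ge0 //.
  exact: e0E k f' (G1E k f' Gf').
have h2 : `|dotv (g k) (f - f')| <= n%:R * B * d.
  apply: (le_trans (dotv_bound _ _)); rewrite -mulrA ler_wpM2l //.
  by rewrite ler_pM // ltW.
move: h2; rewrite ler_norml => /andP[h2 _]; lra.
Unshelve. all: by end_near. Qed.

End G.


Theorem mainTheorem13 (R : realType) (n : nat) (Om : set 'rV[R]_n)
  (ns : seq nat) (j : nat) (E F : set 'rV[R]_n)
  (F0 F1 : nat -> set 'rV[R]_n) (eps : nat -> R) (v : 'rV[R]_n) :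
  closed_convex_cone Om -> pointed_cone Om -> solid Om ->
  face_dim_seq (dual Om) ns ->
  facially_compact (dual Om) ns -> locally_smooth (dual Om) ->
  (1 <= j <= (size ns).-1)%N ->
  Pcal (dual Om) ns j (E, F) ->
  (forall k, Pcal (dual Om) ns j (E, F0 k)) ->
  (forall k, Pcal (dual Om) ns j (E, F1 k)) ->
  (fun k => (F0 k : fell)) @ \oo --> (F : fell) ->
  (fun k => (F1 k : fell)) @ \oo --> (F : fell) ->
  (forall k, 0 < eps k) -> eps @ \oo --> 0 ->
  (fun k => (eps k)^-1 *: (eF E (F0 k) - eF E (F1 k))) @ \oo --> v ->
  Ehalf E F v.
Proof.
move=> _ _ _ hns _ hls hj hEF hF0 hF1 cF0 cF1 eps0 _ hv.
have hC := dual_cone Om.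
have [e1F deF oF uF] := @eF_spec _ _ (dual Om) ns j E F hC hns hls hj hEF.
have sp0 k := @eF_spec _ _ (dual Om) ns j E (F0 k) hC hns hls hj (hF0 k).
have sp1 k := @eF_spec _ _ (dual Om) ns j E (F1 k) hC hns hls hj (hF1 k).
have [[_ [ME [ME1 _ EM]]] _ _] := hEF.
have conv0 : (fun k => eF E (F0 k)) @ \oo --> eF E F.
  apply: (@conv_e _ _ E F F0 _ _ _ ME EM ME1) => //.
  - by move=> k; case: (sp0 k).
  - by move=> k; case: (sp0 k).
  - by move=> k; case: (sp0 k).
have conv1 : (fun k => eF E (F1 k)) @ \oo --> eF E F.
  apply: (@conv_e _ _ E F F1 _ _ _ ME EM ME1) => //.
  - by move=> k; case: (sp1 k).
  - by move=> k; case: (sp1 k).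
  - by move=> k; case: (sp1 k).
set e0 := fun k => eF E (F0 k) in conv0 hv.
set e1 := fun k => eF E (F1 k) in conv1 hv.
set e := eF E F in conv0 conv1 e1F deF oF uF *.
set g := fun k => (eps k)^-1 *: (e0 k - e1 k) in hv.
split; [split|].
- apply: (@sub_span _ _ E _ ME v ME1).
  apply: (@closed_cvg _ _ _ _ g [set x | (x <= ME)%MS] (closed_rowspace _ ME) _ _ hv).
  apply: nearW => k /=; rewrite /g scalerBr -scaleNr.
  apply: (@span_sub _ _ E _ ME _ EM); apply: span_comb.
    by case: (sp0 k) => _ [].
  by case: (sp1 k) => _ [].
- move=> f Ff; apply/eqP; rewrite eq_le; apply/andP; split; last first.
    apply: (@half_ineq _ _ E F F1 e0 e1 (fun k => (eps k)^-1) v) => //.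
    + by move=> k; rewrite invr_ge0 ltW.
    + by move=> k; case: (sp0 k) => _ [].
    + by move=> k; case: (sp1 k).
    + by move=> k; case: (hF1 k).
  rewrite -oppr_ge0 -dotvNl.
  apply: (@half_ineq _ _ E F F0 e1 e0 (fun k => (eps k)^-1) (- v)) => //.
  + by move=> k; rewrite invr_ge0 ltW.
  + by move=> k; case: (sp1 k) => _ [].
  + by move=> k; case: (sp0 k).
  + by move=> k; case: (hF0 k).
  have -> : (fun k => (eps k)^-1 *: (e1 k - e0 k)) = (fun k => - g k).
    by apply: funext => k; rewrite /g /= -scalerN opprB.
  exact: cvgN.
- move=> a /= ->.
  have cv : (fun k => dotv (g k) (e0 k + e1 k)) @ \oo --> dotv v (e + e).
    exact: (@cvg_dotv _ _ _ \oo _ g (fun k => e0 k + e1 k) v (e + e) hv (cvgD conv0 conv1)).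
  have := @closed_cvg _ _ _ _ _ [set r : R | r = 0] (@closed_eq _ _) _ _ cv.
  rewrite dotvDr => h.
  suff : dotv v e + dotv v e = 0 by lra.
  apply: h; apply: nearW => k /=.
  rewrite /g dotvZl !dotvBl !dotvDr (dotvC (e1 k) (e0 k)).
  case: (sp0 k) => -> _ _ _; case: (sp1 k) => -> _ _ _.
  by rewrite [dotv (e0 k) (e1 k) + 1]addrC subrr mulr0.
Qed.
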